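(* Let $\pi=\pi_{-n}\cdots\pi_{-1}\pi_1\cdots\pi_n$ be a signed permutation of $[n]$ in full notation. Let $i>0$ be the largest index such that $\pi_i<0$ if such an index exists, and $i=0$ otherwise. Let $\sigma_L=\pi_{-n}\cdots\pi_{-(i+1)}$, $\tau=\pi_{-i}\cdots\pi_{-1}\pi_1\cdots\pi_i$ (empty if $i=0$), and $\sigma_R=\pi_{i+1}\cdots\pi_n$, so that $\pi=\sigma_L\tau\sigma_R$. Then $\pi$ is $\underline{2}31$-avoiding if and only if all of the following hold: (1) the positive entries of $\tau$ appear in decreasing order; (2) $\sigma_R$ avoids the pattern $231$; (3) for every positive entry $x$ of $\tau$, all entries of $\sigma_R$ smaller than $x$ appear to the left of all entries of $\sigma_R$ larger than $x$.
   Context: A signed permutation of $[n]$ is a sequence $(\pi_1,\dots,\pi_n)$ of elements of $\{\pm1,\dots,\pm n\}$ with $\{|\pi_1|,\dots,|\pi_n|\}=[n]$; its full notation is the string $\pi_{-n}\pi_{-(n-1)}\cdots\pi_{-1}\pi_1\pi_2\cdots\pi_n$ with $\pi_{-j}:=-\pi_j$. A string $s$ of integers contains the pattern $231$ if there are positions $k<l<m$ with $s_m<s_k<s_l$, and avoids it otherwise. A signed permutation in full notation is $\underline{2}31$-avoiding if there are no positions $k<l<m$ (in the order of the full notation) with $\pi_m<\pi_k<\pi_l$ and $\pi_k>0$. *)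

(* Defs.v *)
From mathcomp Require Import all_boot all_order all_algebra.
Set Implicit Arguments. Unset Strict Implicit. Unset Printing Implicit Defensive.
Import Order.TTheory GRing.Theory Num.Theory.
Local Open Scope ring_scope.

(* A signed permutation of [n], given by the sequence (pi_1, ..., pi_n)
   of its entries (0-based list index j stores pi_(j+1)). *)
Definition signed_perm (n : nat) (s : seq int) : Prop :=
  size s = n /\ perm_eq (map (fun x : int => absz x) s) (iota 1 n).

Definition full_notation (s : seq int) : seq int :=
  rev (map (fun x => - x) s) ++ s.

Definition contains231 (s : seq int) : Prop :=
  exists k l m : nat, (k < l)%N /\ (l < m)%N /\ (m < size s)%N /\
    nth 0 s m < nth 0 s k /\ nth 0 s k < nth 0 s l.

Definition avoids231 (s : seq int) : Prop := ~ contains231 s.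

(* s contains the pattern underline-2 31 (the "2" entry positive). *)
Definition contains_u231 (s : seq int) : Prop :=
  exists k l m : nat, (k < l)%N /\ (l < m)%N /\ (m < size s)%N /\
    nth 0 s m < nth 0 s k /\ nth 0 s k < nth 0 s l /\ 0 < nth 0 s k.

Definition avoids_u231 (s : seq int) : Prop := ~ contains_u231 s.

(* i (1-based) is the largest index with pi_i < 0, or i = 0 if none exists. *)
Definition last_neg_index (s : seq int) (i : nat) : Prop :=
  (i <= size s)%N /\ ((0 < i)%N -> nth 0 s i.-1 < 0) /\
  (forall j : nat, (i <= j)%N -> (j < size s)%N -> 0 <= nth 0 s j).

Definition tau_part (s : seq int) (i : nat) : seq int :=
  rev (map (fun x => - x) (take i s)) ++ take i s.
Definition sigmaR_part (s : seq int) (i : nat) : seq int := drop i s.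

Definition pos_decreasing (t : seq int) : Prop :=
  sorted (fun a b : int => b < a) (filter (fun x : int => 0 < x) t).

Definition split_by (x : int) (r : seq int) : Prop :=
  forall a b : nat, (a < size r)%N -> (b < size r)%N ->
    nth 0 r a < x -> x < nth 0 r b -> (a < b)%N.

(* Main.v *)
Require Import Defs.
From mathcomp Require Import all_boot all_order all_algebra zify.
Import Order.TTheory GRing.Theory Num.Theory.
Local Open Scope ring_scope.

Lemma pairwise_filterE (r : rel int) (P : pred int) (s : seq int) :
  pairwise r (filter P s) = pairwise (fun a b => P a ==> P b ==> r a b) s.
Proof.
elim: s => [|x s IH] //=.
case Px: (P x) => /=; rewrite IH //.
by rewrite (all_filter (r x) P).
by rewrite all_predT.
Qed.

Lemma pf_nth (r : rel int) (P : pred int) (s : seq int) :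
  pairwise r (filter P s) <-> forall a b, (a < b)%N -> (b < size s)%N ->
    P (nth 0 s a) -> P (nth 0 s b) -> r (nth 0 s a) (nth 0 s b).
Proof.
rewrite pairwise_filterE; split.
- move/(pairwiseP 0) => H a b ab bs Pa Pb.
  have := H a b; rewrite !inE => /(_ (ltn_trans ab bs) bs ab).
  by rewrite Pa Pb.
- move=> H; apply/(pairwiseP 0) => a b; rewrite !inE => as_ bs ab.
  by apply/implyP => Pa; apply/implyP => Pb; apply: H.
Qed.

Lemma posdecP (T : seq int) : pos_decreasing T <-> forall a b, (a < b)%N -> (b < size T)%N ->
    0 < nth 0 T a -> 0 < nth 0 T b -> nth 0 T b < nth 0 T a.
Proof.
rewrite /pos_decreasing sorted_pairwise; last first.
  by move=> y x z hxy hyz; apply: lt_trans hyz hxy.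
exact: (pf_nth (fun a b => b < a) (fun x => 0 < x)).
Qed.

Section G.
Variables L T R : seq int.
Let u := L ++ T ++ R.

Lemma nthL k : (k < size L)%N -> nth 0 u k = nth 0 L k.
Proof. by move=> h; rewrite /u nth_cat h. Qed.
Lemma nthT a : (a < size T)%N -> nth 0 u (size L + a) = nth 0 T a.
Proof. by move=> h; rewrite /u nth_cat ltnNge leq_addr /= addKn nth_cat h. Qed.
Lemma nthR b : nth 0 u (size L + size T + b) = nth 0 R b.
Proof.
rewrite /u nth_cat ltnNge -addnA leq_addr /= addKn nth_cat ltnNge leq_addr /=.
by rewrite addKn.
Qed.
Lemma sizeu : size u = (size L + size T + size R)%N.
Proof. by rewrite /u !size_cat addnA. Qed.

Lemma gen :
  {in L, forall x, x <= 0} -> {in R, forall x, 0 <= x} ->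
  ((0 < size T)%N -> nth 0 T (size T).-1 < 0) ->
  uniq (filter (fun x => 0 < x) T) ->
  ~ contains_u231 u <-> [/\ pos_decreasing T, avoids231 R &
     forall x, x \in T -> 0 < x -> split_by x R].
Proof.
move=> hL hR hT hU; split.
- move=> H; split.
  + apply/posdecP => a b ab bT Pa Pb.
    have /(pf_nth _ (fun x => 0 < x)) hne : pairwise (fun x y => x != y) (filter (fun x => 0 < x) T).
      by rewrite -uniq_pairwise.
    have ne := hne a b ab bT Pa Pb.
    rewrite lt_neqAle eq_sym ne /=.
    case: leP => // hlt; exfalso; apply: H.
    have bl : (b < (size T).-1)%N.
      have : b != (size T).-1.
        apply/eqP => e; have := hT (leq_ltn_trans (leq0n _) bT); rewrite -e => h.
        by move: (lt_trans h Pb); rewrite ltxx.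
      lia.
    exists (size L + a)%N, (size L + b)%N, (size L + (size T).-1)%N.
    rewrite sizeu !nthT; try lia.
    split; first lia. split; first lia. split; first lia.
    split; last by split.
    by apply: lt_trans (hT _) Pa; lia.
  + move=> [k [l [m [kl [lm [mR [h1 h2]]]]]]]; apply: H.
    exists (size L + size T + k)%N, (size L + size T + l)%N, (size L + size T + m)%N.
    rewrite sizeu !nthR; do 3 (split; first lia).
    do 2 (split; first by []).
    apply: le_lt_trans h1; apply: hR; exact: mem_nth.
  + move=> x xT xpos a b aR bR ha hb.
    case: (ltngtP a b) => // hab.
      exfalso; apply: H.
      exists (size L + index x T)%N, (size L + size T + b)%N, (size L + size T + a)%N.
      have iT : (index x T < size T)%N by rewrite index_mem.
      rewrite sizeu !nthR nthT // nth_index //.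
      do 3 (split; first lia). by [].
    by subst; move: (lt_trans ha hb); rewrite ltxx.
- move=> [h1 h2 h3] [k [l [m [kl [lm [mu [hmk [hkl hk]]]]]]]].
  move: mu; rewrite sizeu => mu.
  case: (ltnP k (size L)) => kL.
    by move: hk; rewrite nthL // => hk; move: (lt_le_trans hk (hL _ (mem_nth 0 kL))); rewrite ltxx.
  case: (ltnP k (size L + size T)) => kT.
    have ek : k = (size L + (k - size L))%N by lia.
    move: hmk hkl hk; rewrite ek nthT; last lia.
    set x := nth 0 T (k - size L) => hmk hkl hk.
    have hh : (k - size L < size T)%N by lia.
    have xT : x \in T by exact: mem_nth hh.
    case: (ltnP l (size L + size T)) => lT.
      have el : l = (size L + (l - size L))%N by lia.
      move: hkl; rewrite el nthT; last lia. move=> hkl.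
      have := (proj1 (posdecP T) h1 (k - size L) (l - size L))%N.
      move=> /(_ ltac:(lia) ltac:(lia) hk (lt_trans hk hkl)) h.
      by move: (lt_trans h hkl); rewrite ltxx.
    have el : l = (size L + size T + (l - size L - size T))%N by lia.
    have em : m = (size L + size T + (m - size L - size T))%N by lia.
    move: hkl hmk; rewrite el em !nthR => hkl hmk.
    have := h3 x xT hk (m - size L - size T)%N (l - size L - size T)%N.
    move=> /(_ ltac:(lia) ltac:(lia) hmk hkl); lia.
  apply: h2.
  have ek : k = (size L + size T + (k - size L - size T))%N by lia.
  have el : l = (size L + size T + (l - size L - size T))%N by lia.
  have em : m = (size L + size T + (m - size L - size T))%N by lia.
  move: hmk hkl; rewrite ek el em !nthR => hmk hkl.
  exists (k - size L - size T)%N, (l - size L - size T)%N, (m - size L - size T)%N.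
  do 3 (split; first lia). by [].
Qed.
End G.

Theorem lemma4p1 (n : nat) (s : seq int) (i : nat) :
  signed_perm n s -> last_neg_index s i ->
  avoids_u231 (full_notation s) <->
  [/\ pos_decreasing (tau_part s i),
      avoids231 (sigmaR_part s i) &
      forall x : int, x \in tau_part s i -> 0 < x -> split_by x (sigmaR_part s i)].
Proof.
move=> [sz hp] [isz [ilast inn]].
have eu : full_notation s = rev (map (fun x => - x) (sigmaR_part s i)) ++ tau_part s i ++ sigmaR_part s i.
  have gen2 : forall a b : seq int, rev (map (fun x => - x) (a ++ b)) ++ (a ++ b)
     = rev (map (fun x => - x) b) ++ (rev (map (fun x => - x) a) ++ a) ++ b.
    by move=> a b; rewrite map_cat rev_cat -!catA.
  by rewrite /full_notation /tau_part /sigmaR_part -gen2 cat_take_drop.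
set t := take i s; set R := sigmaR_part s i.
rewrite /avoids_u231 eu; apply: gen.
- move=> x; rewrite mem_rev => /mapP [y yR ->].
  rewrite oppr_le0.
  have iR : (index y R < size R)%N by rewrite index_mem.
  rewrite -(nth_index 0 yR) /R /sigmaR_part nth_drop; apply: inn.
    by rewrite leq_addr.
  have hs : (i + index y R < size s)%N by move: iR; rewrite /R /sigmaR_part size_drop; lia.
  exact hs.
- move=> y yR.
  have iR : (index y R < size R)%N by rewrite index_mem.
  rewrite -(nth_index 0 yR) /R /sigmaR_part nth_drop; apply: inn.
    by rewrite leq_addr.
  have hs : (i + index y R < size s)%N by move: iR; rewrite /R /sigmaR_part size_drop; lia.
  exact hs.
- have st : size t = i by rewrite size_takel.
  rewrite /tau_part -/t size_cat size_rev size_map st => hi.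
  rewrite nth_cat size_rev size_map st.
  have hh : (i <= (i + i).-1)%N by lia.
  rewrite ltnNge hh /=.
  have -> : ((i + i).-1 - i = i.-1)%N by lia.
  rewrite /t nth_take; last lia.
  apply: ilast; lia.
- have nz : forall x, x \in s -> x != 0.
    move=> x xs; apply/eqP => x0.
    have : absz x \in iota 1 n by rewrite -(perm_mem hp); apply: map_f.
    by rewrite x0 mem_iota.
  have ut : uniq (map (fun x : int => absz x) t).
    rewrite /t map_take; apply: take_uniq; by rewrite (perm_uniq hp) iota_uniq.
  rewrite /tau_part -/t filter_cat filter_rev filter_map.
  apply: (@map_uniq _ _ (fun x : int => absz x)).
  have pr : forall X : seq nat, perm_eq (rev X) X by move=> X; rewrite perm_rev.
  rewrite map_cat map_rev -map_comp.
  have -> : [seq ((fun x : int => absz x) \o (fun x : int => - x)) i0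
            | i0 <- t & preim (fun x : int => - x) (fun x : int => 0 < x) i0]
          = [seq absz x | x <- t & preim (fun x : int => - x) (fun x : int => 0 < x) x].
    by apply: eq_map => x /=; rewrite abszN.
  rewrite (perm_uniq (perm_cat (pr _) (perm_refl _))) -map_cat.
  set a := preim (fun x : int => - x) (fun x : int => 0 < x).
  have -> : [seq x <- t | 0 < x] = [seq x <- t | predC a x].
    apply: eq_in_filter => x xt /=.
    have xs : x \in s by apply: mem_take xt.
    have := nz x xs; rewrite /a /= oppr_gt0 -leNgt.
    by rewrite lt_neqAle eq_sym => ->.
  have pf : perm_eq ([seq x <- t | a x] ++ [seq x <- t | predC a x]) t by rewrite perm_filterC.
  by rewrite (perm_uniq (perm_map _ pf)).
Qed.
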